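(* Let $d\ge 1$, $p\ge 1$, $\lambda>0$, and let $\mathbf{x}=(x_1,\dots,x_n)$ and $\mathbf{x}'=(x'_1,\dots,x'_{n'})$ be two time series with values in $\mathbb{R}^d$, with $p<n$ and $p<n'$. Set $N=n+n'-2p$, and define $\mathbf{X}=[X\;X']\in\mathbb{R}^{pd\times N}$, $\mathbf{Y}=[Y\;Y']\in\mathbb{R}^{d\times N}$ and the $N\times N$ diagonal matrix $$\Delta=\operatorname{diag}\Big(\underbrace{\tfrac{1}{2(n-p)},\dots,\tfrac{1}{2(n-p)}}_{n-p\text{ times}},\underbrace{\tfrac{1}{2(n'-p)},\dots,\tfrac{1}{2(n'-p)}}_{n'-p\text{ times}}\Big),$$ where $X,Y,X',Y'$ are as described in the context. Define the autoregressive kernel of order $p$ and degrees of freedom $\lambda$ by $$k(\mathbf{x},\mathbf{x}')=\frac{1}{|\mathbf{X}\Delta\mathbf{X}^T+I_{pd}|^{\frac d2}\,\big|\mathbf{Y}\big(\Delta-\Delta\mathbf{X}^T(\mathbf{X}\Delta\mathbf{X}^T+I_{pd})^{-1}\mathbf{X}\Delta\big)\mathbf{Y}^T+I_d\big|^{\frac{1+\lambda}{2}}}.$$ Let $\alpha=\frac{1+\lambda}{d}$. Then $$k(\mathbf{x},\mathbf{x}')=\Big(|\mathbf{X}^T\mathbf{X}\Delta+I_N|^{1-\alpha}\,|\mathbf{X}^T\mathbf{X}\Delta+\mathbf{Y}^T\mathbf{Y}\Delta+I_N|^{\alpha}\Big)^{-\frac d2}.$$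
   Context: $|M|$ denotes the determinant of a square matrix $M$ and $I_m$ the $m\times m$ identity. For a time series $\mathbf{x}=(x_1,\dots,x_n)$ in $\mathbb{R}^d$ with $n>p$: $X\in\mathbb{R}^{pd\times(n-p)}$ is the matrix whose $i$-th column ($i=1,\dots,n-p$) is the stacked vector $(x_i;x_{i+1};\dots;x_{i+p-1})\in\mathbb{R}^{pd}$, and $Y\in\mathbb{R}^{d\times(n-p)}$ is the matrix whose $i$-th column is $x_{p+i}$, i.e. $Y=[x_{p+1},\dots,x_n]$. $X',Y'$ are defined in the same way from $\mathbf{x}'$ (with $n'-p$ columns). *)

(* Defs.v *)
From HB Require Import structures.
From mathcomp Require Import all_boot all_order all_algebra.
From mathcomp Require Import reals exp.
Set Implicit Arguments. Unset Strict Implicit. Unset Printing Implicit Defensive.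
Import Order.TTheory GRing.Theory Num.Theory.
Local Open Scope ring_scope.

Section AR.
Variable R : realType.

(* A time series x = (x_0,...,x_{n-1}) in R^d (0-indexed version of x_1..x_n).
   tsget x k r = r-th coordinate of x_k (0 outside the range; never used
   out of range under the hypotheses p < n). *)
Definition tsget (d n : nat) (x : 'I_n -> 'cV[R]_d) (k r : nat) : R :=
  match @insub nat (fun k => (k < n)%N) _ k, @insub nat (fun r => (r < d)%N) _ r with
  | Some k', Some r' => x k' r' ord0
  | _, _ => 0
  end.

(* X in R^{pd x (n-p)}: column i is the stacked vector (x_i; ...; x_{i+p-1});
   row index a = k*d + r (0 <= k < p, 0 <= r < d) holds coordinate r of x_{i+k}. *)
Definition arX (d p n : nat) (x : 'I_n -> 'cV[R]_d) : 'M[R]_(p * d, n - p) :=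
  \matrix_(a < p * d, i < n - p) tsget x (i + a %/ d) (a %% d).

Definition arY (d p n : nat) (x : 'I_n -> 'cV[R]_d) : 'M[R]_(d, n - p) :=
  \matrix_(r < d, i < n - p) tsget x (p + i) r.

Definition arDelta (n n' p : nat) : 'M[R]_((n - p) + (n' - p)) :=
  diag_mx (row_mx (const_mx (1 / (2 * (n - p)%:R)) : 'rV[R]_(n - p))
                  (const_mx (1 / (2 * (n' - p)%:R)) : 'rV[R]_(n' - p))).

Definition ar_kernel (d p n n' : nat) (lambda : R)
    (x : 'I_n -> 'cV[R]_d) (x' : 'I_n' -> 'cV[R]_d) : R :=
  let bX := row_mx (arX p x) (arX p x') in
  let bY := row_mx (arY p x) (arY p x') in
  let D := arDelta n n' p in
  let M := bX *m D *m bX^T + 1%:M in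
  1 / (powR (\det M) (d%:R / 2) *
       powR (\det (bY *m (D - D *m bX^T *m invmx M *m bX *m D) *m bY^T + 1%:M))
            ((1 + lambda) / 2)).

End AR.

(* Main.v *)
Require Import Defs.
From HB Require Import structures.
From mathcomp Require Import all_boot all_order all_algebra.
From mathcomp Require Import reals exp.
Import Order.TTheory GRing.Theory Num.Theory.
Local Open Scope ring_scope.

Lemma sylvester (R : comNzRingType) m n (P : 'M[R]_(m, n)) (Q : 'M[R]_(n, m)) :
  \det (1%:M + P *m Q) = \det (1%:M + Q *m P).
Proof.
pose M := block_mx 1%:M (- P) Q 1%:M.
have e1 : block_mx 1%:M P 0 1%:M *m M = block_mx (1%:M + P *m Q) 0 Q 1%:M.
  rewrite mulmx_block !mul1mx !mulmx1 !mul0mx !add0r.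
  by rewrite addNr.
have e2 : M *m block_mx 1%:M P 0 1%:M = block_mx 1%:M 0 Q (1%:M + Q *m P).
  rewrite mulmx_block !mul1mx !mulmx1 !mulmx0 !addr0.
  by rewrite subrr addrC.
have := congr1 determinant e1; have := congr1 determinant e2.
rewrite !det_mulmx !det_ublock !det_lblock !det1 !mul1r !mulr1 => <- ->.
by [].
Qed.

Lemma detpos (R : rcfType) k N (Z : 'M[R]_(k, N)) (w : 'rV[R]_N) :
  (forall j, 0 <= w 0 j) -> 0 < \det (Z *m diag_mx w *m Z^T + 1%:M).
Proof.
move=> w0.
set M := Z *m diag_mx w *m Z^T.
have Mpos : forall v : 'rV[R]_k, 0 <= (v *m M *m v^T) 0 0.
  move=> v; rewrite /M !mulmxA -(mulmxA _ Z^T) -trmx_mul mul_mx_diag.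
  rewrite mxE; apply: sumr_ge0 => j _; rewrite !mxE.
  by rewrite mulrAC mulr_ge0 // -expr2 sqr_ge0.
pose h : {poly R} := \det (1%:M + 'X *: map_mx polyC M).
have hE : forall t, h.[t] = \det (1%:M + t *: M).
  move=> t; rewrite -horner_evalE -det_map_mx map_mxD map_mxZ map_mx1 /=.
  congr (\det (_ + _ *: _)); first by rewrite horner_evalE hornerX.
  by apply/matrixP => i j; rewrite !mxE horner_evalE hornerC.
rewrite addrC -[M]scale1r -hE.
rewrite ltNge; apply/negP => h1.
have := @poly_ivt R (- h) 0 1 ler01.
rewrite !hornerN hE scale0r addr0 det1 oppr_ge0 h1 lerN10 => /(_ isT).
case=> t /andP[t0 t1] /rootP; rewrite hornerN hE => /eqP; rewrite oppr_eq0.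
case/det0P => v v0; rewrite mulmxDr mulmx1 -scalemxAr => /(congr1 (fun A => (A *m v^T) 0 0)).
rewrite mulmxDl -scalemxAl mul0mx => e.
have {e} e : (v *m v^T) 0 0 + t * (v *m M *m v^T) 0 0 = 0.
  have addE (A B : 'M[R]_1) : (A + B) 0 0 = A 0 0 + B 0 0 by rewrite mxE.
  have sclE a (A : 'M[R]_1) : (a *: A) 0 0 = a * A 0 0 by rewrite mxE.
  have z0 : (0 : 'M[R]_1) 0 0 = 0 by rewrite mxE.
  by move: e; rewrite addE sclE z0.
have : 0 < (v *m v^T) 0 0.
  rewrite mxE lt_def; apply/andP; split; last by apply: sumr_ge0 => j _; rewrite !mxE -expr2 sqr_ge0.
  apply/negP => /eqP; rewrite (eq_bigr (fun j => v 0 j ^+ 2)) => [|j _]; last by rewrite !mxE expr2.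
  move/eqP; rewrite psumr_eq0 => [|j _]; last exact: sqr_ge0.
  move/allP => H; move/negP: v0; apply; apply/eqP/matrixP => i j.
  rewrite (ord1 i) mxE; apply/eqP; rewrite -sqrf_eq0; exact: H (mem_index_enum j) .
have : 0 <= t * (v *m M *m v^T) 0 0 by rewrite mulr_ge0 ?Mpos.
move=> H1 H2; move: (ltr_wpDr H1 H2); by rewrite e ltxx.
Qed.
Lemma zmod_aux (V : zmodType) (a w dd : V) : a - (a - w) + (dd - w) = dd.
Proof. by rewrite opprB (addrC a) subrK addrC subrK. Qed.

Theorem proposition1 (R : realType) (d p n n' : nat) (lambda : R)
    (x : 'I_n -> 'cV[R]_d) (x' : 'I_n' -> 'cV[R]_d) :
  (1 <= d)%N -> (1 <= p)%N -> 0 < lambda -> (p < n)%N -> (p < n')%N ->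
  let bX := row_mx (arX p x) (arX p x') in
  let bY := row_mx (arY p x) (arY p x') in
  let D := arDelta R n n' p in
  let alpha := (1 + lambda) / d%:R in
  ar_kernel p lambda x x' =
  powR (powR (\det (bX^T *m bX *m D + 1%:M)) (1 - alpha) *
        powR (\det (bX^T *m bX *m D + bY^T *m bY *m D + 1%:M)) alpha)
       (- (d%:R / 2)).

Proof.
move=> d1 p1 lam0 pn pn' bX bY D alpha.
rewrite /ar_kernel; cbv zeta.
rewrite -/bX -/bY -/D.
have [w Dw w0] : exists2 w : 'rV[R]_(n - p + (n' - p)), D = diag_mx w & forall j, 0 <= w 0 j.
  eexists; first reflexivity.
  move=> j; rewrite mxE; case: splitP => k _; rewrite mxE divr_ge0 ?mulr_ge0 ?ler0n //.
set A := bX *m D *m bX^T + 1%:M.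
have Apos : 0 < \det A by rewrite /A Dw; apply: detpos.
have e1 : \det (bX^T *m bX *m D + 1%:M) = \det A.
  by rewrite addrC -mulmxA sylvester addrC.
set Z := col_mx bX bY.
have eE : bX^T *m bX *m D + bY^T *m bY *m D + 1%:M = Z^T *m Z *m D + 1%:M.
  by rewrite tr_col_mx mul_row_col mulmxDl.
have Epos : 0 < \det (Z^T *m Z *m D + 1%:M).
  by rewrite addrC -mulmxA sylvester addrC Dw detpos.
set S := D - D *m bX^T *m invmx A *m bX *m D.
have Aunit : A \in unitmx by rewrite unitmxE unitfE gt_eqF.
have AiU : invmx A *m (bX *m D *m bX^T) = 1%:M - invmx A.
  by rewrite -[X in X - _](mulVmx Aunit) /A mulmxDr mulmx1 addrK.
have k : D *m bX^T *m invmx A *m bX *m D *m (bX^T *m bX *m D)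
    = D *m (bX^T *m bX *m D) - D *m bX^T *m invmx A *m bX *m D.
  have H : D *m bX^T *m (invmx A *m (bX *m D *m bX^T)) *m bX *m D
     = D *m bX^T *m (1%:M - invmx A) *m bX *m D by rewrite AiU.
  move: H; rewrite mulmxBr mulmx1 !mulmxBl !mulmxA => H.
  by rewrite H.
have SB : S *m (bX^T *m bX *m D + 1%:M) = D.
  by rewrite /S mulmxDr mulmx1 mulmxBl k zmod_aux.
have eEC : \det (bX^T *m bX *m D + bY^T *m bY *m D + 1%:M)
    = \det A * \det (bY *m S *m bY^T + 1%:M).
  have -> : bX^T *m bX *m D + bY^T *m bY *m D + 1%:M
      = (1%:M + bY^T *m (bY *m S)) *m (bX^T *m bX *m D + 1%:M).
    by rewrite mulmxDl mul1mx -(mulmxA bY^T (bY *m S)) -(mulmxA bY S) SB mulmxA addrAC.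
  by rewrite det_mulmx sylvester e1 mulrC [1%:M + _]addrC.
have cpos : 0 < \det (bY *m S *m bY^T + 1%:M).
  by move: Epos; rewrite -eE eEC pmulr_rgt0.
rewrite e1 eEC.
move: Apos cpos; set a := \det A; set c := \det _ => Apos cpos.
have ge0P (u r : R) : 0 <= u `^ r by apply: powR_ge0.
rewrite (powRM alpha (ltW Apos) (ltW cpos)) mulrA -powRD; last by rewrite (gt_eqF Apos) implybT.
rewrite subrK powRr1 ?ltW // (powRM _ (ltW Apos) (ge0P _ _)) -powRrM !powRN mulrN powRN.
have -> : alpha * (d%:R / 2) = (1 + lambda) / 2.
  rewrite /alpha -mulrA (mulrA (d%:R)^-1) mulVf ?mul1r //.
  by rewrite pnatr_eq0 -lt0n.
by rewrite invfM mul1r.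
Qed.
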